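(* Let $G$ be a connected (finite, simple) graph. Then $G$ is (claw, bull)-free if and only if it belongs to one of the following (disjoint) classes of graphs: (i) the class of graphs which are expansions of paths of length at least four; (ii) the class of graphs which are expansions of cycles of length at least six; (iii) the class of connected graphs which are complements of triangle-free graphs.
   Context: A claw is a graph isomorphic to $K_{1,3}$. A bull is the graph obtained from a triangle by adding two pendant edges at two different vertices (so it has 5 vertices and 5 edges). A graph is (claw, bull)-free if it has no induced subgraph isomorphic to a claw or to a bull. An expansion of a graph $F$ with vertex set $\{v_1,\dots,v_n\}$ is any graph $H$ obtained from $F$ by replacing each vertex $v_i$ by a nonempty clique $K^{[i]}$, the cliques being pairwise vertex-disjoint, and adding all edges between $V(K^{[i]})$ and $V(K^{[j]})$ whenever $v_iv_j\in E(F)$ (and no other edges between different cliques). The length of a path is its number of edges. *)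

(* Defs.v *)
From mathcomp Require Import all_boot.
Set Implicit Arguments. Unset Strict Implicit. Unset Printing Implicit Defensive.

Definition simple_graph (T : finType) (e : rel T) : Prop :=
  symmetric e /\ irreflexive e.

Definition connected_graph (T : finType) (e : rel T) : Prop :=
  0 < #|T| /\ forall x y : T, connect e x y.

Definition has_induced (k : nat) (f : rel 'I_k) (T : finType) (e : rel T) : Prop :=
  exists g : 'I_k -> T, injective g /\
    forall i j : 'I_k, i != j -> e (g i) (g j) = f i j.

Definition claw : rel 'I_4 :=
  fun i j => (i != j) && ((val i == 0) || (val j == 0)).

(* The bull: triangle 0,1,2 with pendant vertices 3 (at 0) and 4 (at 1). *)
Definition bull_edge (a b : nat) : bool :=
  [|| (a == 0) && (b == 1), (a == 0) && (b == 2), (a == 1) && (b == 2),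
      (a == 0) && (b == 3) | (a == 1) && (b == 4)].
Definition bull : rel 'I_5 :=
  fun i j => bull_edge (val i) (val j) || bull_edge (val j) (val i).

Definition claw_bull_free (T : finType) (e : rel T) : Prop :=
  ~ has_induced claw e /\ ~ has_induced bull e.

(* Path with n vertices 0 - 1 - ... - (n-1), i.e. of length n-1. *)
Definition path_graph (n : nat) : rel 'I_n :=
  fun i j => (val i == (val j).+1) || (val j == (val i).+1).

(* Cycle with n vertices 0 - 1 - ... - (n-1) - 0 (length n, meaningful for n >= 3). *)
Definition cycle_graph (n : nat) : rel 'I_n :=
  fun i j => (val j == (val i).+1 %% n) || (val i == (val j).+1 %% n).

(* G = (T,e) is an expansion of F = ('I_n, f): T is partitioned by phi into the
   n nonempty classes phi^-1(i) (cliques K^[i]); two distinct vertices are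
   adjacent iff they are in the same class, or in classes i, j with ij in E(F). *)
Definition expansion_of (n : nat) (f : rel 'I_n) (T : finType) (e : rel T) : Prop :=
  exists phi : T -> 'I_n,
    (forall i : 'I_n, exists x : T, phi x = i) /\
    (forall x y : T, x != y -> e x y = (phi x == phi y) || f (phi x) (phi y)).

Definition triangle_free (T : finType) (r : rel T) : Prop :=
  forall x y z : T, ~~ [&& r x y, r y z & r x z].

Definition complement (T : finType) (e : rel T) : rel T :=
  fun x y => (x != y) && ~~ e x y.

Definition class_i (T : finType) (e : rel T) : Prop :=
  exists L : nat, 4 <= L /\ @expansion_of L.+1 (@path_graph L.+1) T e.
Definition class_ii (T : finType) (e : rel T) : Prop :=
  exists L : nat, 6 <= L /\ @expansion_of L (@cycle_graph L) T e.
Definition class_iii (T : finType) (e : rel T) : Prop :=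
  connected_graph e /\ triangle_free (complement e).

(* Main.v *)
Require Import Defs.
From mathcomp Require Import all_boot.
From mathcomp Require Import zify.
Set Implicit Arguments. Unset Strict Implicit. Unset Printing Implicit Defensive.

Section Main.
Variable T : finType.
Variable e : rel T.
Hypothesis esym : symmetric e.
Hypothesis eirr : irreflexive e.

Lemma adj_neq x y : e x y -> x != y.
Proof. by apply: contraTneq => ->; rewrite eirr. Qed.

Ltac fin_e := solve [ assumption | apply: negbTE; assumption | rewrite esym; assumption
  | rewrite esym; apply: negbTE; assumption | done | apply/negbT; assumption
  | rewrite esym; apply/negbT; assumption | rewrite eq_sym; assumption ].

Lemma claw_of c a b d : e c a -> e c b -> e c d -> ~~ e a b -> ~~ e a d -> ~~ e b d ->
  a != b -> a != d -> b != d -> has_induced claw e.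
Proof.
move=> ca cb cd ab ad bd nab nad nbd.
have nca := adj_neq ca; have ncb := adj_neq cb; have ncd := adj_neq cd.
pose g (i : 'I_4) := match val i with 0 => c | 1 => a | 2 => b | _ => d end.
exists g; split.
- move=> [[|[|[|[|k]]]] Hk] [[|[|[|[|l]]]] Hl] //= H; try (apply: val_inj => //=);
  rewrite /g /= in H; subst; rewrite ?eqxx // in nab nad nbd nca ncb ncd;
  by rewrite eq_sym ?eqxx in nab nad nbd nca ncb ncd.
- move=> [[|[|[|[|k]]]] Hk] [[|[|[|[|l]]]] Hl] //= _; rewrite /g /claw /=; fin_e.
Qed.

Lemma dist3 z x y : e z x -> ~~ e z y -> x != y.
Proof. by move=> H1; apply: contra => /eqP <-. Qed.

Lemma bull_of a b c d f : e a b -> e a c -> e b c -> e a d -> e b f ->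
  ~~ e a f -> ~~ e b d -> ~~ e c d -> ~~ e c f -> ~~ e d f -> has_induced bull e.
Proof.
move=> ab ac bc ad bf af bd cd cf df.
have n1 := adj_neq ab; have n2 := adj_neq ac; have n3 := adj_neq bc.
have n4 := adj_neq ad; have n5 := adj_neq bf.
have n6 : b != d by apply: (@dist3 c); fin_e.
have n7 : c != d by apply: (@dist3 b); fin_e.
have n8 : a != f by apply: (@dist3 c); fin_e.
have n9 : c != f by apply: (@dist3 a); fin_e.
have n10 : d != f by apply: (@dist3 a); fin_e.
pose g (i : 'I_5) := match val i with 0 => a | 1 => b | 2 => c | 3 => d | _ => f end.
exists g; split.
- move=> [[|[|[|[|[|k]]]]] Hk] [[|[|[|[|[|l]]]]] Hl] //= H; try (apply: val_inj => //=);
  rewrite /g /= in H; subst; rewrite ?eqxx // in n1 n2 n3 n4 n5 n6 n7 n8 n9 n10;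
  by rewrite eq_sym ?eqxx in n1 n2 n3 n4 n5 n6 n7 n8 n9 n10.
- move=> [[|[|[|[|[|k]]]]] Hk] [[|[|[|[|[|l]]]]] Hl] //= _; rewrite /g /bull /bull_edge /=; fin_e.
Qed.

Lemma boundary (A : pred T) u v : connect e u v -> A u -> ~~ A v ->
  exists x y, [/\ A x, ~~ A y & e x y].
Proof.
move/connectP=> [p]; elim: p u => [|z p IH] u /=.
  by move=> _ -> ->.
move=> /andP[euz pz] lz Au nAv; case Az: (A z).
  exact: IH pz lz Az nAv.
by exists u, z; rewrite Az.
Qed.

Definition isP5 v0 v1 v2 v3 v4 := [/\ e v0 v1, e v1 v2, e v2 v3, e v3 v4 &
  [/\ ~~ e v0 v2, ~~ e v0 v3, ~~ e v0 v4 & [/\ ~~ e v1 v3, ~~ e v1 v4 & ~~ e v2 v4]]].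

Hypothesis nclaw : ~ has_induced claw e.
Hypothesis nbull : ~ has_induced bull e.
Hypothesis conn : forall x y, connect e x y.

Lemma L1 a x b c : e a x -> e x b -> ~~ e a b -> a != b -> ~~ e c a -> ~~ e c x -> ~~ e c b ->
  c != a -> c != x -> c != b -> exists v0 v1 v2 v3 v4, isP5 v0 v1 v2 v3 v4.
Proof.
move=> ax xb ab nab ca cx cb nca ncx ncb.
pose A := [pred v | [|| v == a, v == x, v == b, e a v, e x v | e b v]].
have HA1 : A a by rewrite /= eqxx.
have HA2 : ~~ A c.
  by rewrite /= !negb_or nca ncx ncb !(esym _ c) ca cx cb.
have [y [z [Ay nAz yz]]] := @boundary A a c (conn a c) HA1 HA2.
move: nAz; rewrite /= !negb_or => /and5P[za zx zb az /andP[xz bz]].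
have ya : y != a by apply: contraNneq az => <-.
have yx : y != x by apply: contraNneq xz => <-.
have yb : y != b by apply: contraNneq bz => <-.
move: Ay; rewrite /= (negbTE ya) (negbTE yx) (negbTE yb) /=.
case exy: (e x y); case eay: (e a y); case eby: (e b y) => //= _.
- by case: nclaw; apply: (@claw_of y a b z); fin_e.
- by case: nbull; apply: (@bull_of x y a b z); fin_e.
- by case: nbull; apply: (@bull_of x y b a z); fin_e.
- by case: nclaw; apply: (@claw_of x a b y); fin_e.
- by case: nclaw; apply: (@claw_of y a b z); fin_e.
- by exists z, y, a, x, b; do !split; fin_e.
- by exists z, y, b, x, a; do !split; fin_e.
Qed.

Ltac fin_n := solve [ fin_e | apply: adj_neq; fin_e | rewrite eq_sym; apply: adj_neq; fin_e
  | match goal with |- is_true (?x != ?y) => first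
     [ match goal with z : _ |- _ => apply: (@dist3 z x y); fin_e end
     | rewrite eq_sym; match goal with z : _ |- _ => apply: (@dist3 z y x); fin_e end ] end ].

Lemma P5_exists a b c : ~~ e a b -> ~~ e a c -> ~~ e b c -> a != b -> a != c -> b != c ->
  exists v0 v1 v2 v3 v4, isP5 v0 v1 v2 v3 v4.
Proof.
move=> ab ac bc nab nac nbc.
pose A := [pred v | (v == a) || e a v].
have HA1 : A a by rewrite /= eqxx.
have HA2 : ~~ A b by rewrite /= negb_or eq_sym nab ab.
have [y [z [Ay nAz yz]]] := @boundary A a b (conn a b) HA1 HA2.
move: nAz; rewrite /= negb_or => /andP[za az].
have ya : y != a by apply: contraNneq az => <-.
move: Ay; rewrite /= (negbTE ya) /= => ay.
case ecy: (e c y).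
  case eby: (e b y).
    by case: nclaw; apply: (@claw_of y a b c); fin_e.
  by apply: (@L1 a y c b); fin_n.
case ecz: (e c z).
  case eby: (e b y).
    by apply: (@L1 a y b c); fin_n.
  case ebz: (e b z).
    by apply: (@L1 c z b a); fin_n.
  by apply: (@L1 a y z b); fin_n.
by apply: (@L1 a y z c); fin_n.
Qed.

Definition near (i j : nat) := (i <= j.+1) && (j <= i.+1).

Definition PE (S : {set T}) (n : nat) (phi : T -> nat) : Prop :=
  [/\ 5 <= n, (forall x, x \in S -> phi x < n),
      (forall i, i < n -> exists2 x, x \in S & phi x = i) &
      (forall x y, x \in S -> y \in S -> x != y -> e x y = near (phi x) (phi y))].

Section Ext.
Variables (S : {set T}) (n : nat) (phi : T -> nat).
Hypothesis Hn5 : 5 <= n.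
Hypothesis Hlt : forall x, x \in S -> phi x < n.
Hypothesis Hsurj : forall i, i < n -> exists2 x, x \in S & phi x = i.
Hypothesis Hadj : forall x y, x \in S -> y \in S -> x != y -> e x y = near (phi x) (phi y).

Lemma neq_phi x y : phi x != phi y -> x != y.
Proof. by apply: contraNneq => ->. Qed.

Lemma adjT x y : x \in S -> y \in S -> phi x != phi y -> phi x <= (phi y).+1 ->
  phi y <= (phi x).+1 -> e x y.
Proof. move=> Hx Hy Hne H1 H2; rewrite Hadj //; [by rewrite /near H1 H2 | exact: neq_phi]. Qed.

Lemma adjF x y : x \in S -> y \in S -> (phi x).+1 < phi y \/ (phi y).+1 < phi x -> ~~ e x y.
Proof. move=> Hx Hy H; rewrite Hadj //; [rewrite /near; lia | apply: neq_phi; lia]. Qed.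

Lemma adjC x y : x \in S -> y \in S -> x != y -> phi x = phi y -> e x y.
Proof. move=> Hx Hy Hne H; rewrite Hadj // /near H; lia. Qed.

Variable w : T.
Hypothesis wS : w \notin S.

Lemma neq_w x : x \in S -> w != x.
Proof. by move=> Hx; apply: contraNneq wS => ->. Qed.

Ltac alia := repeat match goal with
  | H : is_true (e _ _) |- _ => clear H
  | H : is_true (~~ e _ _) |- _ => clear H
  | H : e _ _ = _ |- _ => clear H
  | H : is_true (_ \in _) |- _ => clear H
  | H : is_true (_ \notin _) |- _ => clear H
  | H : is_true (?a != _) |- _ => let t := type of a in first [ constr_eq t nat; fail 1 | clear H ]
  end; lia.
Ltac fin_S := match goal with
  | |- is_true (e w _) => fin_e
  | |- is_true (e _ w) => fin_e
  | |- is_true (~~ e w _) => fin_e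
  | |- is_true (~~ e _ w) => fin_e
  | |- is_true (~~ e _ _) => first [ fin_e | apply: adjF; [assumption | assumption | alia] ]
  | |- is_true (e _ _) => first [ fin_e | apply: adjT; [assumption | assumption | alia | alia | alia]
                                  | apply: adjC; [assumption | assumption | fin_n | alia] ]
  | |- is_true (_ != _) => solve [ apply: neq_w; assumption | rewrite eq_sym; apply: neq_w; assumption
                                  | apply: neq_phi; alia | fin_n ]
  end.
Ltac fin_D := fin_S.

Lemma VC c a b : c \in S -> a \in S -> b \in S -> e w c -> ~~ e w a -> ~~ e w b ->
  (phi a).+1 = phi c -> phi b = (phi c).+1 -> False.
Proof. by move=> *; apply: nclaw; apply: (@claw_of c w a b); fin_S. Qed.

Lemma VW x y z : x \in S -> y \in S -> z \in S -> e w x -> e w y -> e w z ->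
  (phi x).+1 < phi y -> (phi y).+1 < phi z -> False.
Proof. by move=> *; apply: nclaw; apply: (@claw_of w x y z); fin_S. Qed.

Lemma VB x y a b : x \in S -> y \in S -> a \in S -> b \in S -> e w x -> e w y ->
  ~~ e w a -> ~~ e w b -> phi y = (phi x).+1 -> (phi a).+1 = phi x -> phi b = (phi y).+1 -> False.
Proof. by move=> *; apply: nbull; apply: (@bull_of x y w a b); fin_S. Qed.

Lemma VP x y a z : e w x -> e w y -> ~~ e w a -> e w z ->
  e x y -> e x a -> ~~ e y a -> ~~ e x z -> ~~ e y z -> ~~ e a z -> False.
Proof. by move=> *; apply: nbull; apply: (@bull_of x w y a z); fin_e. Qed.

Lemma VU x x' y z : x \in S -> x' \in S -> e w x -> ~~ e w x' -> ~~ e w y -> ~~ e w z ->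
  phi x' = phi x -> e x y -> e x' y -> ~~ e x z -> ~~ e x' z -> e y z -> False.
Proof.
move=> Hx Hx' *; have nxx : x != x' by apply: (@dist3 w); fin_e.
have exx : e x x' by apply: adjC.
by apply: nbull; apply: (@bull_of x y x' w z); fin_e.
Qed.

Definition jb (i : nat) := [exists x in S, (phi x == i) && e w x].

Lemma jbP (i : nat) : jb i -> exists x, [/\ x \in S, phi x = i & e w x].
Proof. by move=> /existsP[x /andP[Hx /andP[/eqP H1 H2]]]; exists x. Qed.

Lemma njbP (i : nat) x : ~~ jb i -> x \in S -> phi x = i -> ~~ e w x.
Proof.
move=> nj Hx Hp; apply: contra nj => Hw; apply/existsP; exists x.
by rewrite Hx Hp eqxx Hw.
Qed.

Lemma jbI x : x \in S -> e w x -> jb (phi x).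
Proof. by move=> Hx Hw; apply/existsP; exists x; rewrite Hx eqxx Hw. Qed.

Ltac blia := repeat match goal with
  | H : is_true (jb _) |- _ => clear H
  | H : is_true (~~ jb _) |- _ => clear H
  | H : jb _ = _ |- _ => clear H
  end; alia.

Lemma jb_lt (i : nat) : jb i -> i < n.
Proof. by move=> /jbP[x [Hx <- _]]; apply: Hlt. Qed.

Lemma R1 (k : nat) : jb k -> 0 < k -> k.+1 < n -> ~~ jb k.-1 -> ~~ jb k.+1 -> False.
Proof.
move=> /jbP[t [Ht Hpt Hwt]] k0 kn j1 j2.
have [a Ha Hpa] := @Hsurj (k.-1) (ltac:(alia)).
have [b Hb Hpb] := @Hsurj (k.+1) kn.
apply: (@VC t a b) => //; [exact: njbP j1 Ha Hpa | exact: njbP j2 Hb Hpb | alia | alia].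
Qed.

Lemma R2 (i j k : nat) : jb i -> jb j -> jb k -> i.+1 < j -> j.+1 < k -> False.
Proof.
move=> /jbP[x [Hx Hpx Hwx]] /jbP[y [Hy Hpy Hwy]] /jbP[z [Hz Hpz Hwz]] H1 H2.
by apply: (@VW x y z) => //; alia.
Qed.

Lemma R3 (t : nat) : jb t -> jb t.+1 -> 0 < t -> t.+2 < n -> ~~ jb t.-1 -> ~~ jb t.+2 -> False.
Proof.
move=> /jbP[x [Hx Hpx Hwx]] /jbP[y [Hy Hpy Hwy]] t0 tn j1 j2.
have [a Ha Hpa] := @Hsurj (t.-1) (ltac:(alia)).
have [b Hb Hpb] := @Hsurj (t.+2) tn.
apply: (@VB x y a b) => //; [exact: njbP j1 Ha Hpa | exact: njbP j2 Hb Hpb | alia..].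
Qed.

Lemma R4lo (t y : nat) : jb t -> jb t.+1 -> 0 < t -> ~~ jb t.-1 -> jb y -> t.+2 < y \/ y.+2 < t -> False.
Proof.
move=> /jbP[x [Hx Hpx Hwx]] /jbP[u [Hu Hpu Hwu]] t0 j1 /jbP[z [Hz Hpz Hwz]] Hf.
have [a Ha Hpa] := @Hsurj (t.-1) (ltac:(have := Hlt Hx; alia)).
have Hwa := njbP j1 Ha Hpa.
by apply: (@VP x u a z); fin_S.
Qed.

Lemma R4hi (t y : nat) : jb t -> jb t.+1 -> t.+2 < n -> ~~ jb t.+2 -> jb y -> t.+3 < y \/ y.+1 < t -> False.
Proof.
move=> /jbP[x [Hx Hpx Hwx]] /jbP[u [Hu Hpu Hwu]] tn j1 /jbP[z [Hz Hpz Hwz]] Hf.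
have [a Ha Hpa] := @Hsurj (t.+2) tn.
have Hwa := njbP j1 Ha Hpa.
by apply: (@VP u x a z); fin_S.
Qed.

Lemma classify : (exists x, x \in S /\ e w x) ->
  [\/ exists2 k, k < n & (forall i, i < n -> jb i = near k i),
      (forall i, i < n -> jb i = (i == 0)),
      (forall i, i < n -> jb i = (i == n.-1)) |
      (forall i, i < n -> jb i = (i == 0) || (i == n.-1))].
Proof.
move=> [x0 [Hx0 Hw0]].
have ex : exists i, jb i by exists (phi x0); apply: jbI.
case: (ex_minnP ex) => m jm minm.
have ub : forall i, jb i -> i <= n.-1 by move=> i /jb_lt; blia.
case: (ex_maxnP ex ub) => M jM maxM.
have lo : forall i, i < m -> ~~ jb i by move=> i Hi; apply/negP => /minm; blia.
have hi : forall i, M < i -> ~~ jb i by move=> i Hi; apply/negP => /maxM; blia.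
have Mn : M < n := jb_lt jM.
have mM : m <= M := minm _ jM.
have [MA|MB] := leqP M m.+2.
  have : M = m \/ M = m.+1 \/ M = m.+2 by blia.
  case=> [eM|[eM|eM]]; subst M.
  - case m0: (m == 0).
      apply: Or42 => i Hi; apply/idP/idP => [Hj | /eqP ->].
        by have := minm i Hj; have := maxM i Hj; move: m0 => /eqP; blia.
      by move: jm; move/eqP: m0 => ->.
    case mN: (m == n.-1).
      apply: Or43 => i Hi; apply/idP/idP => [Hj | /eqP ->].
        by have := minm i Hj; have := maxM i Hj; move: mN => /eqP; blia.
      by move: jm; move/eqP: mN => ->.
    exfalso; apply: (@R1 m jm); [blia | blia | apply: lo; blia | apply: hi; blia].
  - case m0: (m == 0).
      apply: Or41; exists 0; first by blia.
      move=> i Hi; apply/idP/idP => [Hj | Hp].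
        by have := minm i Hj; have := maxM i Hj; move: m0 => /eqP; rewrite /near; blia.
      have : i = m \/ i = m.+1 by move: Hp m0; rewrite /near => /andP[_ ?] /eqP; blia.
      by case=> ->.
    case mN: (m.+1 == n.-1).
      apply: Or41; exists m.+1; first by blia.
      move=> i Hi; apply/idP/idP => [Hj | Hp].
        by have := minm i Hj; have := maxM i Hj; rewrite /near; blia.
      have : i = m \/ i = m.+1 by move: Hp mN; rewrite /near => /andP[? ?] /eqP; blia.
      by case=> ->.
    exfalso; apply: (@R3 m jm jM); [blia | blia | apply: lo; blia | apply: hi; blia].
  - case j1: (jb m.+1).
      apply: Or41; exists m.+1; first by blia.
      move=> i Hi; apply/idP/idP => [Hj | Hp].
        by have := minm i Hj; have := maxM i Hj; rewrite /near; blia.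
      have : i = m \/ i = m.+1 \/ i = m.+2 by move: Hp; rewrite /near => /andP[? ?]; blia.
      by case=> [->|[->|->]].
    exfalso; have [m3|m3] := ltnP m.+3 n.
      by apply: (@R1 m.+2 jM); [blia | blia | rewrite /= j1 | apply: hi; blia].
    by apply: (@R1 m jm); [blia | blia | apply: lo; blia | rewrite j1].
have mid : forall j, jb j -> j <= m.+1 \/ M.-1 <= j.
  move=> j Hj; have [//|[H1 H2]] : (j <= m.+1 \/ M.-1 <= j) \/ (m.+1 < j /\ j.+1 < M) by blia.
  by case: (@R2 m j M jm Hj jM).
have m0 : m = 0.
  apply/eqP; apply/negPn/negP => mnz.
  case j1: (jb m.+1).
    by apply: (@R4lo m M jm j1 _ _ jM); [blia | apply: lo; blia | blia].
  by apply: (@R1 m jm); [blia | blia | apply: lo; blia | rewrite j1].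
subst m.
have MN : M = n.-1.
  apply/eqP; apply/negPn/negP => mnz.
  have eM : (M.-1).+1 = M by blia.
  case j1: (jb M.-1).
    have jM' : jb (M.-1).+1 by rewrite eM.
    by apply: (@R4hi (M.-1) 0 j1 jM' _ _ jm); [blia | rewrite eM; apply: hi; blia | blia].
  by apply: (@R1 M jM); [blia | blia | rewrite j1 | apply: hi; blia].
subst M.
have n1 : ~~ jb 1.
  apply/negP => j1.
  apply: (@R4hi 0 n.-1 jm j1 _ _ jM); [blia | | blia].
  by apply/negP => /mid; blia.
have n2 : ~~ jb n.-2.
  apply/negP => j2.
  have jN : jb (n.-2).+1 by have -> : (n.-2).+1 = n.-1 by blia.
  apply: (@R4lo n.-2 0 j2 jN _ _ jm); [blia | | blia].
  by apply/negP => /mid; blia.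
apply: Or44 => i Hi; apply/idP/idP => [Hj | /orP[/eqP -> | /eqP ->] //].
have [H1|H1] := mid i Hj.
  have : i = 0 \/ i = 1 by blia.
  by case=> Hi'; [rewrite Hi' | move: Hj; rewrite Hi' (negbTE n1)].
have : i = n.-1 \/ i = n.-2 by have := maxM i Hj; blia.
by case=> Hi'; [rewrite Hi' eqxx orbT | move: Hj; rewrite Hi' (negbTE n2)].
Qed.

Lemma getJ (j : nat) : jb j -> exists x, [/\ x \in S, phi x = j & e w x].
Proof. exact: jbP. Qed.

Lemma getN (j : nat) : j < n -> ~~ jb j -> exists x, [/\ x \in S, phi x = j & ~~ e w x].
Proof. move=> jn nj; have [x Hx Hp] := @Hsurj j jn; exists x; split => //; exact: njbP nj Hx Hp. Qed.

Lemma unif_gen (P : nat -> bool) : (forall i, i < n -> jb i = P i) ->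
  (forall x', x' \in S -> P (phi x') -> ~~ e w x' -> False) ->
  forall x, x \in S -> e w x = P (phi x).
Proof.
move=> HP HU x Hx; case Pv: (P (phi x)).
  by apply/negPn/negP => nw; exact: HU x Hx Pv nw.
apply/negbTE; apply: (@njbP (phi x)) => //; by rewrite HP ?Pv ?Hlt.
Qed.

Ltac jbF := match goal with HP : forall i : nat, is_true (i < _) -> jb i = @?P i |- _ =>
  rewrite HP; [rewrite /near; blia | blia] end.
Ltac jbT := first [ assumption | jbF ].
Ltac gJ j := let x := fresh "x" in let Hx := fresh "Hx" in let Hp := fresh "Hp" in
  let Hw := fresh "Hw" in let H := fresh "H" in
  have H : jb j; [jbT | ];
  have [x [Hx Hp Hw]] := getJ H; clear H.
Ltac gN j := let x := fresh "y" in let Hx := fresh "Hy" in let Hp := fresh "Hq" in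
  let Hw := fresh "Hn" in let H := fresh "H" in let H2 := fresh "H" in
  have H : ~~ jb j; [jbF | ];
  have H2 : j < n; [blia | ];
  have [x [Hx Hp Hw]] := getN H2 H; clear H H2.

Lemma unif_near k : k < n -> (forall i, i < n -> jb i = near k i) ->
  forall x, x \in S -> e w x = near k (phi x).
Proof.
move=> kn Hpat; apply: unif_gen => // x' Hx' Hnear nw.
have Hi := Hlt Hx'.
have : (phi x').+1 = k \/ phi x' = k \/ phi x' = k.+1 by move: Hnear; rewrite /near; blia.
case=> [Hk|[Hk|Hk]].
- have [k2|k2] := ltnP k.+2 n.
    gJ (k); gJ (k.+1); gN (k.+2).
    by apply: (@VB x x0 x' y) => //; blia.
  gJ (k.-1); gN (k.-2); gN (k - 3).
  by apply: (@VU x x' y y0) => //; first [blia | fin_S].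
- have [k2|k2] := leqP 2 k.
    gJ (k.-1); gN (k.-2).
    by apply: (@VC x y x') => //; blia.
  gJ (k.+1); gN (k.+2).
  by apply: (@VC x x' y) => //; blia.
- have [k2|k2] := leqP 2 k.
    gJ (k.-1); gJ (k); gN (k.-2).
    by apply: (@VB x x0 y x') => //; blia.
  gJ (k.+1); gN (k.+2); gN (k.+3).
  by apply: (@VU x x' y y0) => //; first [blia | fin_S].
Qed.

Lemma unif_0 : (forall i, i < n -> jb i = (i == 0)) ->
  forall x, x \in S -> e w x = (phi x == 0).
Proof.
move=> Hpat; apply: (@unif_gen (fun i => i == 0)) => // x' Hx' /eqP H0 nw.
have j0 : jb 0 by rewrite Hpat; blia.
gJ (0); gN (1); gN (2).
by apply: (@VU x x' y y0) => //; first [blia | fin_S].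
Qed.

Lemma unif_N : (forall i, i < n -> jb i = (i == n.-1)) ->
  forall x, x \in S -> e w x = (phi x == n.-1).
Proof.
move=> Hpat; apply: (@unif_gen (fun i => i == n.-1)) => // x' Hx' /eqP H0 nw.
have j0 : jb n.-1 by rewrite Hpat; blia.
gJ (n.-1); gN (n.-2); gN (n - 3).
by apply: (@VU x x' y y0) => //; first [blia | fin_S].
Qed.

Lemma unif_C : (forall i, i < n -> jb i = (i == 0) || (i == n.-1)) ->
  forall x, x \in S -> e w x = (phi x == 0) || (phi x == n.-1).
Proof.
move=> Hpat; apply: (@unif_gen (fun i => (i == 0) || (i == n.-1))) => // x' Hx' /orP[] /eqP H0 nw.
  have j0 : jb 0 by rewrite Hpat; blia.
  gJ (0); gN (1); gN (2).
  by apply: (@VU x x' y y0) => //; first [blia | fin_S].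
have j0 : jb n.-1 by rewrite Hpat; blia.
gJ (n.-1); gN (n.-2); gN (n - 3).
by apply: (@VU x x' y y0) => //; first [blia | fin_S].
Qed.

Lemma near_sym a b : near a b = near b a.
Proof. by rewrite /near andbC. Qed.

Lemma ext_near k : k < n -> (forall x, x \in S -> e w x = near k (phi x)) ->
  PE (w |: S) n (fun x => if x == w then k else phi x).
Proof.
move=> kn Hw; split => //.
- move=> x; rewrite in_setU1; case: (x == w) => //= Hx; exact: Hlt.
- move=> i Hi; have [x Hx Hp] := @Hsurj i Hi; exists x; first by rewrite in_setU1 Hx orbT.
  by have := neq_w Hx; rewrite eq_sym => /negbTE ->.
- move=> x y; rewrite !in_setU1; case xw: (x == w); case yw: (y == w) => /=.
  + by move=> _ _; rewrite (eqP xw) (eqP yw) eqxx.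
  + by move=> _ Hy _; rewrite (eqP xw) Hw.
  + by move=> Hx _ _; rewrite (eqP yw) esym Hw // near_sym.
  + exact: Hadj.
Qed.

Lemma ext_0 : (forall x, x \in S -> e w x = (phi x == 0)) ->
  PE (w |: S) n.+1 (fun x => if x == w then 0 else (phi x).+1).
Proof.
move=> Hw; split => //; first by blia.
- move=> x; rewrite in_setU1; case: (x == w) => //= Hx; have := Hlt Hx; blia.
- move=> [|i] Hi.
    by exists w; rewrite ?in_setU1 eqxx.
  have [x Hx Hp] := @Hsurj i (ltac:(blia)); exists x; first by rewrite in_setU1 Hx orbT.
  by have := neq_w Hx; rewrite eq_sym => /negbTE ->; rewrite Hp.
- move=> x y; rewrite !in_setU1; case xw: (x == w); case yw: (y == w) => /=.
  + by move=> _ _; rewrite (eqP xw) (eqP yw) eqxx.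
  + by move=> _ Hy _; rewrite (eqP xw) Hw // /near; blia.
  + by move=> Hx _ _; rewrite (eqP yw) esym Hw // /near; blia.
  + by move=> Hx Hy nxy; rewrite Hadj // /near; blia.
Qed.

Lemma ext_N : (forall x, x \in S -> e w x = (phi x == n.-1)) ->
  PE (w |: S) n.+1 (fun x => if x == w then n else phi x).
Proof.
move=> Hw; split => //; first by blia.
- move=> x; rewrite in_setU1; case: (x == w) => //= Hx; have := Hlt Hx; blia.
- move=> i Hi; have [iN|iN] := ltnP i n.
    have [x Hx Hp] := @Hsurj i iN; exists x; first by rewrite in_setU1 Hx orbT.
    by have := neq_w Hx; rewrite eq_sym => /negbTE ->.
  by exists w; rewrite ?in_setU1 ?eqxx //; blia.
- move=> x y; rewrite !in_setU1; case xw: (x == w); case yw: (y == w) => /=.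
  + by move=> _ _; rewrite (eqP xw) (eqP yw) eqxx.
  + by move=> _ Hy _; rewrite (eqP xw) Hw // /near; have := Hlt Hy; blia.
  + by move=> Hx _ _; rewrite (eqP yw) esym Hw // /near; have := Hlt Hx; blia.
  + exact: Hadj.
Qed.

Lemma step : (exists x, x \in S /\ e w x) ->
  (exists n' phi', PE (w |: S) n' phi') \/
  (forall x, x \in S -> e w x = (phi x == 0) || (phi x == n.-1)).
Proof.
move=> H; case: (classify H) => [[k kn Hp]|Hp|Hp|Hp].
- by left; exists n, (fun x => if x == w then k else phi x); exact: ext_near kn (unif_near kn Hp).
- by left; exists n.+1, (fun x => if x == w then 0 else (phi x).+1); exact: ext_0 (unif_0 Hp).
- by left; exists n.+1, (fun x => if x == w then n else phi x); exact: ext_N (unif_N Hp).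
- by right; exact: unif_C Hp.
Qed.

End Ext.

Section Fin.
Ltac blia := repeat match goal with
  | H : is_true (e _ _) |- _ => clear H
  | H : is_true (~~ e _ _) |- _ => clear H
  | H : e _ _ = _ |- _ => clear H
  | H : is_true (_ \in _) |- _ => clear H
  | H : is_true (_ \notin _) |- _ => clear H
  | H : is_true (?a != _) |- _ => let t := type of a in first [ constr_eq t nat; fail 1 | clear H ]
  end; lia.
Variables (S : {set T}) (n : nat) (phi : T -> nat).
Hypothesis Hn5 : 5 <= n.
Hypothesis Hlt : forall x, x \in S -> phi x < n.
Hypothesis Hsurj : forall i, i < n -> exists2 x, x \in S & phi x = i.
Hypothesis Hadj : forall x y, x \in S -> y \in S -> x != y -> e x y = near (phi x) (phi y).

Lemma final_path : (forall x, x \in S) -> class_i e.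
Proof.
move=> HS; exists n.-1; split; first by blia.
have Hl x : phi x < n.-1.+1 by have := Hlt (HS x); blia.
exists (fun x => inord (phi x)); split.
  move=> i; have [x Hx Hp] := @Hsurj (nat_of_ord i) (ltac:(have := ltn_ord i; blia)).
  by exists x; apply: val_inj; rewrite /= inordK ?Hp.
move=> x y nxy; rewrite Hadj // /path_graph -val_eqE /= !inordK // /near; blia.
Qed.

Variable w0 : T.
Hypothesis Hw0 : w0 \notin S.
Hypothesis Hw0a : exists x, x \in S /\ e w0 x.
Hypothesis Hcl : forall w, w \notin S -> (exists x, x \in S /\ e w x) ->
  forall x, x \in S -> e w x = (phi x == 0) || (phi x == n.-1).

Definition inW w := (w \notin S) && [exists x in S, e w x].

Lemma inWP w : inW w -> forall x, x \in S -> e w x = (phi x == 0) || (phi x == n.-1).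
Proof. by move=> /andP[H1 /existsP[x /andP[H2 H3]]]; apply: Hcl => //; exists x. Qed.

Lemma inWS w : inW w -> w \notin S.
Proof. by case/andP. Qed.

Lemma W_clique w1 w2 : inW w1 -> inW w2 -> w1 != w2 -> e w1 w2.
Proof.
move=> W1 W2 n12; apply/negPn/negP => e12.
have [x0 Hx0 Hp0] := @Hsurj 0 (ltac:(blia)).
have [y Hy Hpy] := @Hsurj 1 (ltac:(blia)).
have a1 := inWP W1 Hx0; have a2 := inWP W2 Hx0.
have b1 := inWP W1 Hy; have b2 := inWP W2 Hy.
rewrite Hp0 /= in a1 a2; rewrite Hpy in b1 b2.
have c1 : (1 == 0) || (1 == n.-1) = false by blia.
rewrite c1 in b1 b2.
have n1 := neq_w (inWS W1) Hy; have n2 := neq_w (inWS W2) Hy.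
have dxy : x0 != y by apply: (@neq_phi phi); rewrite Hp0 Hpy.
have exy : e x0 y by rewrite Hadj // Hp0 Hpy.
by apply: nclaw; apply: (@claw_of x0 w1 w2 y); fin_e.
Qed.

Lemma cover u : (u \in S) || inW u.
Proof.
apply/negPn/negP => Hu.
have [x0 Hx0 Hp0] := @Hsurj 0 (ltac:(blia)).
have [xN HxN HpN] := @Hsurj n.-1 (ltac:(blia)).
pose A := [pred v | (v \in S) || inW v].
have [v [z [Av nAz vz]]] := @boundary A x0 u (conn x0 u) (ltac:(by rewrite /= Hx0)) Hu.
move: nAz; rewrite /= negb_or => /andP[zS zW].
have zN : forall x, x \in S -> ~~ e z x.
  move=> x Hx; apply: contra zW => ezx; rewrite /inW zS /=; apply/existsP; exists x; by rewrite Hx.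
case/orP: Av => [vS|vW].
  by have := zN v vS; rewrite esym vz.
have a0 := inWP vW Hx0; have aN := inWP vW HxN.
rewrite Hp0 eqxx /= in a0; rewrite HpN eqxx orbT in aN.
have nz0 := zN x0 Hx0; have nzN := zN xN HxN.
have d0 := neq_w zS Hx0; have dN := neq_w zS HxN.
have d2 : x0 != xN by apply: (@neq_phi phi); rewrite Hp0 HpN; blia.
have e0N : ~~ e x0 xN by rewrite Hadj // Hp0 HpN /near; blia.
by apply: nclaw; apply: (@claw_of v z x0 xN); fin_e.
Qed.

Lemma final_cycle : class_ii e.
Proof.
exists n.+1; split; first by blia.
pose f x := if x \in S then phi x else n.
have Hf x : f x < n.+1 by rewrite /f; case: ifP => [/Hlt|]; blia.
exists (fun x => inord (f x)); split.
  move=> i; have [iN|iN] := ltnP (nat_of_ord i) n.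
    have [x Hx Hp] := @Hsurj (nat_of_ord i) iN.
    by exists x; apply: val_inj; rewrite /= inordK // /f Hx.
  case: Hw0a => x [Hx _].
  exists w0; apply: val_inj; rewrite /= inordK // /f (negbTE Hw0); have := ltn_ord i; blia.
move=> x y nxy; rewrite /cycle_graph -val_eqE /= !inordK //.
have := cover x; have := cover y; rewrite /f.
case xS: (x \in S); case yS: (y \in S) => /= Wy Wx.
- have := Hlt xS; have := Hlt yS => h1 h2.
  rewrite Hadj // !modn_small ?ltnS // /near; blia.
- have := Hlt xS => h1.
  rewrite esym (inWP Wy xS) modnn !modn_small ?ltnS //; blia.
- have := Hlt yS => h1.
  rewrite (inWP Wx yS) modnn !modn_small ?ltnS //; blia.
- by rewrite W_clique // eqxx.
Qed.

End Fin.

Ltac blia := repeat match goal with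
  | H : is_true (e _ _) |- _ => clear H
  | H : is_true (~~ e _ _) |- _ => clear H
  | H : e _ _ = _ |- _ => clear H
  | H : is_true (_ \in _) |- _ => clear H
  | H : is_true (_ \notin _) |- _ => clear H
  | H : is_true (?a != _) |- _ => let t := type of a in first [ constr_eq t nat; fail 1 | clear H ]
  end; lia.
Lemma grow k : forall S n phi, #|~: S| <= k -> PE S n phi -> class_i e \/ class_ii e.
Proof.
elim: k => [|k IH] S n phi Hk [Hn5 Hlt Hsurj Hadj].
  left; apply: (@final_path S n phi) => // x.
  by move: Hk; rewrite leqn0 => /eqP/cards0_eq/setP/(_ x); rewrite !inE => /negbFE.
pose good w := (w \notin S) && [exists x in S, e w x] &&
  ~~ [forall x in S, e w x == ((phi x == 0) || (phi x == n.-1))].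
case: (pickP good) => [w /andP[/andP[wS /existsP[x /andP[Hx Hwx]]] ncl] | nog].
  have [[n' [phi' HPE]]|Hc] := @step S n phi Hn5 Hlt Hsurj Hadj w wS (ex_intro _ x (conj Hx Hwx)).
    apply: (IH (w |: S) n' phi') => //.
    rewrite setCU -ltnS; apply: leq_trans Hk; apply: proper_card.
    rewrite properEneq subsetIr andbT; apply/eqP => /setP/(_ w).
    by rewrite !inE eqxx wS.
  by move: ncl; rewrite negb_forall_in => /existsP[y /andP[Hy /eqP]]; rewrite Hc.
have Hcl : forall w, w \notin S -> (exists x, x \in S /\ e w x) ->
    forall x, x \in S -> e w x = (phi x == 0) || (phi x == n.-1).
  move=> w wS [x [Hx Hwx]] y Hy; have := nog w; rewrite /good wS /=.
  have -> : [exists x in S, e w x] by apply/existsP; exists x; rewrite Hx.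
  by move/negbFE/forall_inP/(_ y Hy)/eqP.
case: (pickP [pred w | (w \notin S) && [exists x in S, e w x]]) => [w0 /andP[w0S /existsP[x /andP[Hx Hwx]]]| none].
  right; apply: (@final_cycle S n phi Hn5 Hlt Hsurj Hadj w0 w0S) => //; by exists x.
left; apply: (@final_path S n phi) => // u.
apply/negPn/negP => uS.
have [x0 Hx0 _] := @Hsurj 0 (ltac:(blia)).
have [v [z [Av nAz vz]]] := @boundary (mem S) x0 u (conn x0 u) Hx0 uS.
have := none z; rewrite /= nAz /=; move/negbT/negP; apply.
by apply/existsP; exists v; apply/andP; split; [exact: Av | rewrite esym].
Qed.

Lemma seed v0 v1 v2 v3 v4 : isP5 v0 v1 v2 v3 v4 ->
  exists S n phi, PE S n phi.
Proof.
move=> [e01 e12 e23 e34 [f02 f03 f04 [f13 f14 f24]]].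
have n01 : v0 != v1 by fin_n.
have m10 : (v1 == v0) = false by rewrite eq_sym; apply/negbTE.
have n02 : v0 != v2 by fin_n.
have m20 : (v2 == v0) = false by rewrite eq_sym; apply/negbTE.
have n03 : v0 != v3 by fin_n.
have m30 : (v3 == v0) = false by rewrite eq_sym; apply/negbTE.
have n04 : v0 != v4 by fin_n.
have m40 : (v4 == v0) = false by rewrite eq_sym; apply/negbTE.
have n12 : v1 != v2 by fin_n.
have m21 : (v2 == v1) = false by rewrite eq_sym; apply/negbTE.
have n13 : v1 != v3 by fin_n.
have m31 : (v3 == v1) = false by rewrite eq_sym; apply/negbTE.
have n14 : v1 != v4 by fin_n.
have m41 : (v4 == v1) = false by rewrite eq_sym; apply/negbTE.
have n23 : v2 != v3 by fin_n.
have m32 : (v3 == v2) = false by rewrite eq_sym; apply/negbTE.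
have n24 : v2 != v4 by fin_n.
have m42 : (v4 == v2) = false by rewrite eq_sym; apply/negbTE.
have n34 : v3 != v4 by fin_n.
have m43 : (v4 == v3) = false by rewrite eq_sym; apply/negbTE.
pose phi x := if x == v0 then 0 else if x == v1 then 1 else if x == v2 then 2
  else if x == v3 then 3 else 4.
exists [set v0; v1; v2; v3; v4], 5, phi; split => //.
- by move=> x _; rewrite /phi; repeat case: ifP.
- move=> [|[|[|[|[|i]]]]] // _.
  + by exists v0; rewrite ?inE ?eqxx ?orbT // /phi ?(negbTE n01) ?m10 ?(negbTE n02) ?m20 ?(negbTE n03) ?m30 ?(negbTE n04) ?m40 ?(negbTE n12) ?m21 ?(negbTE n13) ?m31 ?(negbTE n14) ?m41 ?(negbTE n23) ?m32 ?(negbTE n24) ?m42 ?(negbTE n34) ?m43 ?eqxx.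
  + by exists v1; rewrite ?inE ?eqxx ?orbT // /phi ?(negbTE n01) ?m10 ?(negbTE n02) ?m20 ?(negbTE n03) ?m30 ?(negbTE n04) ?m40 ?(negbTE n12) ?m21 ?(negbTE n13) ?m31 ?(negbTE n14) ?m41 ?(negbTE n23) ?m32 ?(negbTE n24) ?m42 ?(negbTE n34) ?m43 ?eqxx.
  + by exists v2; rewrite ?inE ?eqxx ?orbT // /phi ?(negbTE n01) ?m10 ?(negbTE n02) ?m20 ?(negbTE n03) ?m30 ?(negbTE n04) ?m40 ?(negbTE n12) ?m21 ?(negbTE n13) ?m31 ?(negbTE n14) ?m41 ?(negbTE n23) ?m32 ?(negbTE n24) ?m42 ?(negbTE n34) ?m43 ?eqxx.
  + by exists v3; rewrite ?inE ?eqxx ?orbT // /phi ?(negbTE n01) ?m10 ?(negbTE n02) ?m20 ?(negbTE n03) ?m30 ?(negbTE n04) ?m40 ?(negbTE n12) ?m21 ?(negbTE n13) ?m31 ?(negbTE n14) ?m41 ?(negbTE n23) ?m32 ?(negbTE n24) ?m42 ?(negbTE n34) ?m43 ?eqxx.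
  + by exists v4; rewrite ?inE ?eqxx ?orbT // /phi ?(negbTE n01) ?m10 ?(negbTE n02) ?m20 ?(negbTE n03) ?m30 ?(negbTE n04) ?m40 ?(negbTE n12) ?m21 ?(negbTE n13) ?m31 ?(negbTE n14) ?m41 ?(negbTE n23) ?m32 ?(negbTE n24) ?m42 ?(negbTE n34) ?m43 ?eqxx.
move=> x y; rewrite !inE.
case/orP => [/orP[/orP[/orP[/eqP->|/eqP->]|/eqP->]|/eqP->]|/eqP->];
case/orP => [/orP[/orP[/orP[/eqP->|/eqP->]|/eqP->]|/eqP->]|/eqP->];
rewrite ?eqxx // => _; rewrite /phi ?(negbTE n01) ?m10 ?(negbTE n02) ?m20 ?(negbTE n03) ?m30 ?(negbTE n04) ?m40 ?(negbTE n12) ?m21 ?(negbTE n13) ?m31 ?(negbTE n14) ?m41 ?(negbTE n23) ?m32 ?(negbTE n24) ?m42 ?(negbTE n34) ?m43 ?eqxx /near /=; fin_e.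
Qed.

Lemma forward_main : class_i e \/ class_ii e \/ triangle_free (complement e).
Proof.
case: (boolP [forall x, forall y, forall z,
    ~~ [&& complement e x y, complement e y z & complement e x z]]) => [H|H].
  by right; right => x y z; move/forallP: H => /(_ x)/forallP/(_ y)/forallP/(_ z).
move: H; rewrite negb_forall => /existsP[a]; rewrite negb_forall => /existsP[b].
rewrite negb_forall => /existsP[c] /negPn /and3P[].
rewrite /complement => /andP[nab ab] /andP[nbc bc] /andP[nac ac].
have [v0 [v1 [v2 [v3 [v4 HP]]]]] := @P5_exists a b c ab ac bc nab nac nbc.
have [S [n [phi HPE]]] := seed HP.
have := @grow #|~: S| S n phi (leqnn _) HPE; tauto.
Qed.

Lemma exp_free (n : nat) (f : rel 'I_n) (phi : T -> 'I_n) :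
  (forall x y, x != y -> e x y = (phi x == phi y) || f (phi x) (phi y)) ->
  (forall i j k : 'I_n, i != j -> j != k -> i != k -> f i j -> f j k -> f i k -> False) ->
  (forall c a b d : 'I_n, f c a -> f c b -> f c d ->
      a != b -> a != d -> b != d -> False) ->
  claw_bull_free e.
Proof.
move=> Hexp Htri Hcl; split.
  move=> [g [ginj Hg]].
  pose o0 := @Ordinal 4 0 isT; pose o1 := @Ordinal 4 1 isT.
  pose o2 := @Ordinal 4 2 isT; pose o3 := @Ordinal 4 3 isT.
  have D i j : i != j -> g i != g j by move=> h; rewrite (inj_eq ginj).
  have E i j : i != j -> e (g i) (g j) = (phi (g i) == phi (g j)) || f (phi (g i)) (phi (g j)).
    by move=> h; apply: Hexp; apply: D.
  have h01 : e (g o0) (g o1) by rewrite Hg.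
  have h02 : e (g o0) (g o2) by rewrite Hg.
  have h03 : e (g o0) (g o3) by rewrite Hg.
  have h12 : e (g o1) (g o2) = false by rewrite Hg.
  have h21 : e (g o2) (g o1) = false by rewrite Hg.
  have h31 : e (g o3) (g o1) = false by rewrite Hg.
  have h32 : e (g o3) (g o2) = false by rewrite Hg.
  have h13 : e (g o1) (g o3) = false by rewrite Hg.
  have h23 : e (g o2) (g o3) = false by rewrite Hg.
  rewrite E // in h01; rewrite E // in h02; rewrite E // in h03.
  rewrite E // in h12; rewrite E // in h13; rewrite E // in h23.
  rewrite E // in h21; rewrite E // in h31; rewrite E // in h32.
  move: h12 h13 h23 h21 h31 h32 => /norP[a1 a2] /norP[b1 b2] /norP[c1 c2]
    /norP[_ a3] /norP[_ b3] /norP[_ c3].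
  have ha : f (phi (g o0)) (phi (g o1)).
    case/orP: h01 => [/eqP H|//]; exfalso.
    by case/orP: h02 => [/eqP H2 | H2]; [move: a1; rewrite -H -H2 eqxx | move: a2; rewrite -H H2].
  have hb : f (phi (g o0)) (phi (g o2)).
    case/orP: h02 => [/eqP H|//]; exfalso.
    by case/orP: h01 => [/eqP H2 | H2]; [move: a1; rewrite -H -H2 eqxx | move: a3; rewrite -H H2].
  have hd : f (phi (g o0)) (phi (g o3)).
    case/orP: h03 => [/eqP H|//]; exfalso.
    by case/orP: h01 => [/eqP H2 | H2]; [move: b1; rewrite -H -H2 eqxx | move: b3; rewrite -H H2].
  by apply: (Hcl _ _ _ _ ha hb hd).
move=> [g [ginj Hg]].
pose o0 := @Ordinal 5 0 isT; pose o1 := @Ordinal 5 1 isT.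
pose o2 := @Ordinal 5 2 isT; pose o3 := @Ordinal 5 3 isT; pose o4 := @Ordinal 5 4 isT.
have D i j : i != j -> g i != g j by move=> h; rewrite (inj_eq ginj).
have same x y z : phi x = phi y -> z != x -> z != y -> e z x = e z y.
  by move=> H zx zy; rewrite !Hexp // H.
have ab : phi (g o0) != phi (g o1).
  apply/eqP => H; have := same _ _ (g o3) H (D o3 o0 isT) (D o3 o1 isT).
  by rewrite (Hg o3 o0 isT) (Hg o3 o1 isT).
have ac : phi (g o0) != phi (g o2).
  apply/eqP => H; have := same _ _ (g o3) H (D o3 o0 isT) (D o3 o2 isT).
  by rewrite (Hg o3 o0 isT) (Hg o3 o2 isT).
have bc : phi (g o1) != phi (g o2).
  apply/eqP => H; have := same _ _ (g o4) H (D o4 o1 isT) (D o4 o2 isT).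
  by rewrite (Hg o4 o1 isT) (Hg o4 o2 isT).
have h01 : e (g o0) (g o1) by rewrite Hg.
have h02 : e (g o0) (g o2) by rewrite Hg.
have h12 : e (g o1) (g o2) by rewrite Hg.
rewrite Hexp ?D // (negbTE ab) /= in h01.
rewrite Hexp ?D // (negbTE ac) /= in h02.
rewrite Hexp ?D // (negbTE bc) /= in h12.
exact: (Htri _ _ _ ab bc ac h01 h12 h02).
Qed.

Lemma modS_eq L a b : a < L -> (b == a.+1 %% L) = ((b == a.+1) && (a.+1 < L)) || ((b == 0) && (a.+1 == L)).
Proof.
move=> aL; case: (ltngtP a.+1 L) => h.
- by rewrite modn_small //; lia.
- lia.
- by rewrite h modnn; lia.
Qed.

Lemma path_free : class_i e -> claw_bull_free e.
Proof.
move=> [L [HL [phi [Hs Hexp]]]].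
apply: (exp_free Hexp).
  move=> i j k; rewrite -(val_eqE i j) -(val_eqE j k) -(val_eqE i k) /path_graph.
  move: (val i) (val j) (val k) => I J K; lia.
move=> c a b d; rewrite -(val_eqE a b) -(val_eqE a d) -(val_eqE b d) /path_graph.
move: (val c) (val a) (val b) (val d) => C A B D; lia.
Qed.

Lemma cycle_free : class_ii e -> claw_bull_free e.
Proof.
move=> [L [HL [phi [Hs Hexp]]]].
apply: (exp_free Hexp); clear Hs Hexp phi.
  move=> i j k.
  have li : val i < L := ltn_ord i; have lj : val j < L := ltn_ord j; have lk : val k < L := ltn_ord k.
  rewrite -(val_eqE i j) -(val_eqE j k) -(val_eqE i k) /cycle_graph !modS_eq //.
  move: (val i) (val j) (val k) li lj lk => I J K; lia.
move=> c a b d.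
have la : val a < L := ltn_ord a; have lb : val b < L := ltn_ord b.
have lc : val c < L := ltn_ord c; have ld : val d < L := ltn_ord d.
rewrite -(val_eqE a b) -(val_eqE a d) -(val_eqE b d) /cycle_graph !modS_eq //.
move: (val a) (val b) (val c) (val d) la lb lc ld => A B C D; lia.
Qed.

Lemma tf_free : triangle_free (complement e) -> claw_bull_free e.
Proof.
move=> Htf; split.
  move=> [g [ginj Hg]].
  pose o1 := @Ordinal 4 1 isT; pose o2 := @Ordinal 4 2 isT; pose o3 := @Ordinal 4 3 isT.
  have := Htf (g o1) (g o2) (g o3).
  by rewrite /complement !(inj_eq ginj) (Hg o1 o2 isT) (Hg o2 o3 isT) (Hg o1 o3 isT).
move=> [g [ginj Hg]].
pose o2 := @Ordinal 5 2 isT; pose o3 := @Ordinal 5 3 isT; pose o4 := @Ordinal 5 4 isT.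
have := Htf (g o2) (g o3) (g o4).
by rewrite /complement !(inj_eq ginj) (Hg o2 o3 isT) (Hg o3 o4 isT) (Hg o2 o4 isT).
Qed.

Definition cyc (L i j : nat) := (j == i.+1 %% L) || (i == j.+1 %% L).

Lemma cyc_nb L c : 6 <= L -> c < L -> exists q1 q2, [/\ q1 < L, q2 < L, q1 != c, q2 != c &
  [/\ q1 != q2, cyc L c q1, cyc L c q2 & ~~ cyc L q1 q2]].
Proof.
move=> HL cL; rewrite /cyc.
have [c0|c0] := posnP c.
  exists 1, L.-1; do !split; rewrite ?modS_eq; lia.
have [cN|cN] := ltnP c.+1 L.
  exists c.+1, c.-1; do !split; rewrite ?modS_eq; lia.
exists 0, c.-1; do !split; rewrite ?modS_eq; lia.
Qed.

Lemma disj_12 : class_i e -> class_ii e -> False.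
Proof.
move=> [L1 [HL1 [p1 [Hs1 He1]]]] [L2 [HL2 [p2 [Hs2 He2]]]].
have [x Hx] := Hs1 ord0.
have [q1 [q2 [l1 l2 n1 n2 [n12 a1 a2 na]]]] := cyc_nb HL2 (ltn_ord (p2 x)).
have [y Hy] := Hs2 (Ordinal l1); have [z Hz] := Hs2 (Ordinal l2).
have vy : val (p2 y) = q1 by rewrite Hy.
have vz : val (p2 z) = q2 by rewrite Hz.
have xy : x != y by apply/eqP => E; move: n1; rewrite -vy -E eqxx.
have xz : x != z by apply/eqP => E; move: n2; rewrite -vz -E eqxx.
have yz : y != z by apply/eqP => E; move: n12; rewrite -vy -vz E eqxx.
have exy : e x y by rewrite He2 // /cycle_graph vy; apply/orP; right; exact: a1.
have exz : e x z by rewrite He2 // /cycle_graph vz; apply/orP; right; exact: a2.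
have nyz : ~~ e y z.
  by rewrite He2 // -val_eqE /cycle_graph vy vz (negbTE n12) /=; exact: na.
move: nyz exy exz; rewrite !He1 // -!val_eqE /path_graph Hx /=.
have l1y : val (p1 y) < L1.+1 := ltn_ord _.
have l1z : val (p1 z) < L1.+1 := ltn_ord _.
move: (val (p1 y)) (val (p1 z)) l1y l1z => Y Z; lia.
Qed.

Lemma disj_13 : class_i e -> triangle_free (complement e) -> False.
Proof.
move=> [L1 [HL1 [p1 [Hs1 He1]]]] Htf.
have [x0 H0] := Hs1 (inord 0); have [x2 H2] := Hs1 (inord 2); have [x4 H4] := Hs1 (inord 4).
have v0 : val (p1 x0) = 0 by rewrite H0; apply: inordK.
have v2 : val (p1 x2) = 2 by rewrite H2; apply: inordK; lia.
have v4 : val (p1 x4) = 4 by rewrite H4; apply: inordK; lia.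
have d02 : x0 != x2 by apply/eqP => E; move: v2; rewrite -E v0.
have d24 : x2 != x4 by apply/eqP => E; move: v4; rewrite -E v2.
have d04 : x0 != x4 by apply/eqP => E; move: v4; rewrite -E v0.
have := Htf x0 x2 x4; rewrite /complement d02 d24 d04 !He1 // -!val_eqE /path_graph v0 v2 v4.
by [].
Qed.

Lemma disj_23 : class_ii e -> triangle_free (complement e) -> False.
Proof.
move=> [L [HL [p [Hs He]]]] Htf.
have h0 : 0 < L by lia. have h2 : 2 < L by lia. have h4 : 4 < L by lia.
have [x0 H0] := Hs (Ordinal h0); have [x2 H2] := Hs (Ordinal h2); have [x4 H4] := Hs (Ordinal h4).
have v0 : val (p x0) = 0 by rewrite H0.
have v2 : val (p x2) = 2 by rewrite H2.
have v4 : val (p x4) = 4 by rewrite H4.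
have d02 : x0 != x2 by apply/eqP => E; move: v2; rewrite -E v0.
have d24 : x2 != x4 by apply/eqP => E; move: v4; rewrite -E v2.
have d04 : x0 != x4 by apply/eqP => E; move: v4; rewrite -E v0.
have := Htf x0 x2 x4; rewrite /complement d02 d24 d04 !He // -!val_eqE /cycle_graph v0 v2 v4.
rewrite !modS_eq //; lia.
Qed.

End Main.

Theorem theorem1 (T : finType) (e : rel T) :
  simple_graph e -> connected_graph e ->
  (claw_bull_free e <-> [\/ class_i e, class_ii e | class_iii e]) /\
  (~ (class_i e /\ class_ii e) /\ ~ (class_i e /\ class_iii e) /\
   ~ (class_ii e /\ class_iii e)).
Proof.
move=> [esym eirr] Hc; have [_ conn] := Hc.
split; [split|].
- move=> [nc nb]; case: (forward_main esym eirr nc nb conn) => [H|[H|H]].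
  + exact: Or31.
  + exact: Or32.
  + by apply: Or33; split.
- case=> [H|H|[_ H]]; [exact: path_free H | exact: cycle_free H | exact: tf_free H].
- split; first by case; exact: disj_12.
  split; first by move=> [H [_ H']]; exact: disj_13 H H'.
  by move=> [H [_ H']]; exact: disj_23 H H'.
Qed.
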